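(* Let $\psi\in\mathbb{R}[x]$ and suppose $\psi=\psi^{(1)}\psi^{(2)}$ with $\psi^{(1)},\psi^{(2)}\in\mathbb{R}[x]$ non-constant. If the Fischer operator $F_\psi$ is surjective, then $\psi^{(1)}$ and $\psi^{(2)}$ are harmonic divisors.
   Context: $\mathbb{R}[x]$ denotes the real polynomials in $d$ variables, $\Delta$ the Laplacian, and $F_\psi:\mathbb{R}[x]\to\mathbb{R}[x]$, $F_\psi(q)=\Delta(\psi q)$. A polynomial $f$ is a harmonic divisor if there exists a non-zero polynomial $q$ such that $fq$ is harmonic. *)

(* Defs.v *)
From mathcomp Require Import all_boot all_algebra.
From mathcomp Require Import Rstruct.
From mathcomp Require Import mpoly.
From Stdlib Require Import Reals.
Set Implicit Arguments. Unset Strict Implicit. Unset Printing Implicit Defensive.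
Import GRing.Theory.
Local Open Scope ring_scope.

Definition laplacian (d : nat) (p : {mpoly R[d]}) : {mpoly R[d]} :=
  \sum_(i < d) (p^`M(i))^`M(i).

Definition harmonic (d : nat) (p : {mpoly R[d]}) : Prop := laplacian p = 0.

Definition fischer (d : nat) (psi : {mpoly R[d]}) (q : {mpoly R[d]}) : {mpoly R[d]} :=
  laplacian (psi * q).

Definition harmonic_divisor (d : nat) (f : {mpoly R[d]}) : Prop :=
  exists q : {mpoly R[d]}, q <> 0 /\ harmonic (f * q).

Definition nonconstant (d : nat) (p : {mpoly R[d]}) : Prop :=
  ~ exists c : R, p = c%:MP.

(* Main.v *)
Require Import Defs.
From mathcomp Require Import all_boot all_algebra.
From mathcomp Require Import Rstruct.
From mathcomp Require Import mpoly.
From Stdlib Require Import Reals Classical.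
Local Open Scope ring_scope.
Import GRing.Theory.

Lemma laplacianB (d : nat) (p q : {mpoly R[d]}) :
  laplacian (p - q) = laplacian p - laplacian q.
Proof.
rewrite /laplacian -sumrB; apply: eq_bigr => i _.
by rewrite !mderivB.
Qed.

Lemma unit_const (n : nat) (K : idomainType) (p q : {mpoly K[n]}) :
  q * p = 1 -> p = (p@_0)%:MP.
Proof.
move/mpoly_intro_unit; rewrite unfold_in => /andP [/eqP h _]; exact: h.
Qed.

Lemma half (d : nat) (psi1 psi2 : {mpoly R[d]}) :
  nonconstant psi2 ->
  (forall f : {mpoly R[d]}, exists q : {mpoly R[d]}, fischer (psi1 * psi2) q = f) ->
  harmonic_divisor psi1.
Proof.
move=> nc surj.
case: (classic (harmonic_divisor psi1)) => // nh; exfalso.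
have inj : forall a b : {mpoly R[d]}, laplacian (psi1 * a) = laplacian (psi1 * b) -> a = b.
  move=> a b e; apply/eqP; rewrite -subr_eq0; apply/eqP.
  case: (eqVneq (a - b) 0) => // hne; exfalso; apply: nh.
  exists (a - b); split; first exact/eqP.
  by rewrite /harmonic mulrBr laplacianB e subrr.
have [q hq] := surj (laplacian (psi1 * 1)).
move: hq; rewrite /fischer -mulrA => /inj hq.
apply: nc; exists (psi2@_0).
have hq' : q * psi2 = 1 by rewrite mulrC.
have h := unit_const d R psi2 q hq'. exact h.
Qed.

Theorem mainTheorem4 (d : nat) (psi psi1 psi2 : {mpoly R[d]}) :
  psi = psi1 * psi2 -> nonconstant psi1 -> nonconstant psi2 ->
  (forall f : {mpoly R[d]}, exists q : {mpoly R[d]}, fischer psi q = f) ->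
  harmonic_divisor psi1 /\ harmonic_divisor psi2.
Proof.
move=> -> nc1 nc2 surj; split; first exact: half nc2 surj.
by apply: half nc1 _; rewrite mulrC.
Qed.
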